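(* Let $G=(V,E)$ be an infinite graph satisfying the $CDE(n,-K)$ condition for some $n>0$, $K>0$, with $D_\mu<\infty$ and $D_w<\infty$. Let $u$ be a positive solution of the heat equation $\partial_t u=\Delta u$ on $V$. Then for all vertices and all $t>0$, $$\frac{\Gamma(\sqrt{u})}{u}-\frac{\partial_{t}(\sqrt{u})}{\sqrt{u}}\leq \frac{n}{2t}+\sqrt{\tfrac{1}{2}nKD_{\mu}(D_{w}+1)}.$$
   Context: Graphs: $G=(V,E)$ is a connected, locally finite graph; each edge $xy$ carries a weight $w_{xy}>0$ (possibly $w_{xy}\neq w_{yx}$), and $\mu:V\to(0,\infty)$ is a vertex measure. Write $y\sim x$ if $xy\in E$, $\deg(x)=\sum_{y\sim x}w_{xy}<\infty$, $D_\mu=\sup_{x\in V}\deg(x)/\mu(x)$, $D_w=\sup_{x\sim y}\deg(x)/w_{xy}$. The Laplacian is $\Delta f(x)=\frac{1}{\mu(x)}\sum_{y\sim x}w_{xy}(f(y)-f(x))$. The gradient forms are $2\Gamma(f,g)=\Delta(fg)-f\Delta g-g\Delta f$, $2\Gamma_2(f,g)=\Delta\Gamma(f,g)-\Gamma(f,\Delta g)-\Gamma(\Delta f,g)$, $\Gamma(f)=\Gamma(f,f)$, $\Gamma_2(f)=\Gamma_2(f,f)$. The graph satisfies $CDE(n,K)$ ($n>0$, $K\in\mathbb R$) if for every $f:V\to(0,\infty)$ and every vertex, $\widetilde\Gamma_2(f)\ge\frac1n(\Delta f)^2+K\Gamma(f)$, where $\widetilde\Gamma_2(f)=\Gamma_2(f)-\Gamma\big(f,\frac{\Gamma(f)}{f}\big)$.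 A positive solution of the heat equation on a set $U\subset V$ is a function $u:V\times[0,\infty)\to(0,\infty)$, continuously differentiable in $t$, with $\partial_t u(x,t)=\Delta u(\cdot,t)(x)$ for all $x\in U$, $t\ge 0$; here $\sqrt u$, $\Gamma(\sqrt u)$ etc. are taken at each fixed time. *)

(* Defs.v *)
From Stdlib Require Import Reals List.
From Coquelicot Require Import Coquelicot.
Open Scope R_scope.

(* A locally finite graph on a vertex type V is given by a neighbour list
   [nbr x] (the finitely many y with y ~ x), edge weights w x y (w_{xy},
   possibly asymmetric) and a vertex measure mu. *)

Definition sum_list {V : Type} (l : list V) (F : V -> R) : R :=
  fold_right (fun y acc => F y + acc) 0 l.

Definition adj {V : Type} (nbr : V -> list V) (x y : V) : Prop := In y (nbr x).

Definition is_graph {V : Type} (nbr : V -> list V) : Prop :=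
  (forall x, NoDup (nbr x)) /\
  (forall x y, adj nbr x y -> adj nbr y x) /\
  (forall x, ~ adj nbr x x).

Inductive reach {V : Type} (nbr : V -> list V) : V -> V -> Prop :=
| reach_refl x : reach nbr x x
| reach_step x y z : adj nbr x y -> reach nbr y z -> reach nbr x z.

Definition connected {V : Type} (nbr : V -> list V) : Prop :=
  forall x y : V, reach nbr x y.

Definition infinite_type (V : Type) : Prop :=
  forall l : list V, exists v, ~ In v l.

Definition weights_ok {V : Type} (nbr : V -> list V) (w : V -> V -> R)
  (mu : V -> R) : Prop :=
  (forall x y, adj nbr x y -> 0 < w x y) /\ (forall x, 0 < mu x).

Definition deg {V : Type} (nbr : V -> list V) (w : V -> V -> R) (x : V) : R :=
  sum_list (nbr x) (fun y => w x y).

Definition is_Dmu {V : Type} nbr w (mu : V -> R) (D : R) : Prop :=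
  is_lub (fun r => exists x, r = deg nbr w x / mu x) D.

Definition is_Dw {V : Type} nbr (w : V -> V -> R) (D : R) : Prop :=
  is_lub (fun r => exists x y, adj nbr x y /\ r = deg nbr w x / w x y) D.

Definition Lap {V : Type} nbr w (mu : V -> R) (f : V -> R) (x : V) : R :=
  / mu x * sum_list (nbr x) (fun y => w x y * (f y - f x)).

Definition Gam {V : Type} nbr w (mu : V -> R) (f g : V -> R) (x : V) : R :=
  (Lap nbr w mu (fun z => f z * g z) x - f x * Lap nbr w mu g x
     - g x * Lap nbr w mu f x) / 2.

Definition Gam2 {V : Type} nbr w (mu : V -> R) (f g : V -> R) (x : V) : R :=
  (Lap nbr w mu (Gam nbr w mu f g) x - Gam nbr w mu f (Lap nbr w mu g) x
     - Gam nbr w mu (Lap nbr w mu f) g x) / 2.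

Definition Gam2t {V : Type} nbr w (mu : V -> R) (f : V -> R) (x : V) : R :=
  Gam2 nbr w mu f f x - Gam nbr w mu f (fun z => Gam nbr w mu f f z / f z) x.

Definition CDE {V : Type} nbr w (mu : V -> R) (n K : R) : Prop :=
  forall f : V -> R, (forall z, 0 < f z) ->
  forall x, Gam2t nbr w mu f x >=
            / n * (Lap nbr w mu f x) ^ 2 + K * Gam nbr w mu f f x.

(* u : V -> [0,oo) -> (0,oo) positive solution of the heat equation on V
   (values at t < 0 are irrelevant); differentiable in t for t > 0 and
   right-differentiable at t = 0, with derivative Delta u(.,t)(x).
   (Continuity of the t-derivative then follows automatically.) *)
Definition heat_solution {V : Type} nbr w (mu : V -> R) (u : V -> R -> R) : Prop :=
  (forall x t, 0 <= t -> 0 < u x t) /\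
  (forall x t, 0 < t -> is_derive (u x) t (Lap nbr w mu (fun y => u y t) x)) /\
  (forall x, filterlim (fun h => (u x h - u x 0) / h) (at_right 0)
               (locally (Lap nbr w mu (fun y => u y 0) x))).

(* Main.v *)
Require Import Defs.
From Stdlib Require Import Reals List.
From Coquelicot Require Import Coquelicot.
From Stdlib Require Import Lra Lia Classical ClassicalEpsilon.
Open Scope R_scope.

Section Gen.
Context {V : Type}.

Lemma sum_list_ext (l : list V) F G :
  (forall y, In y l -> F y = G y) -> sum_list l F = sum_list l G.
Proof. induction l; simpl; intros H; auto. rewrite H by auto. rewrite IHl; auto. Qed.

Lemma sum_list_plus (l : list V) F G :
  sum_list l (fun y => F y + G y) = sum_list l F + sum_list l G.
Proof. induction l; simpl; [lra|]. rewrite IHl; lra. Qed.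

Lemma sum_list_scal (l : list V) c F :
  sum_list l (fun y => c * F y) = c * sum_list l F.
Proof. induction l; simpl; [lra|]. rewrite IHl; lra. Qed.

Lemma sum_list_le (l : list V) F G :
  (forall y, In y l -> F y <= G y) -> sum_list l F <= sum_list l G.
Proof. induction l; simpl; intros H; [lra|]. 
  assert (F a <= G a) by auto. assert (sum_list l F <= sum_list l G) by auto. lra. Qed.

Lemma sum_list_nonneg (l : list V) F :
  (forall z, In z l -> 0 <= F z) -> 0 <= sum_list l F.
Proof. induction l; simpl; intros H; [lra|].
  assert (0 <= F a) by auto. assert (0 <= sum_list l F) by auto. lra. Qed.

Lemma sum_list_In_le (l : list V) F y :
  In y l -> (forall z, In z l -> 0 <= F z) -> F y <= sum_list l F.
Proof. induction l; simpl; intros Hi H; [tauto|].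
  destruct Hi as [<-|Hi].
  - assert (0 <= sum_list l F) by (apply sum_list_nonneg; auto). lra.
  - assert (F y <= sum_list l F) by auto. assert (0 <= F a) by auto. lra.
Qed.

Variable nbr : V -> list V. Variable w : V -> V -> R. Variable mu : V -> R.

Lemma Lap_ext f g x : (forall y, f y = g y) -> Lap nbr w mu f x = Lap nbr w mu g x.
Proof. intros H; unfold Lap. f_equal. apply sum_list_ext. intros. rewrite !H; auto. Qed.

Lemma Lap_plus f g x : Lap nbr w mu (fun z => f z + g z) x = Lap nbr w mu f x + Lap nbr w mu g x.
Proof. unfold Lap. rewrite <- Rmult_plus_distr_l, <- sum_list_plus. f_equal.
  apply sum_list_ext; intros; ring. Qed.

Lemma Lap_scal c f x : Lap nbr w mu (fun z => c * f z) x = c * Lap nbr w mu f x.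
Proof. unfold Lap.
  replace (c * (/ mu x * sum_list (nbr x) (fun y : V => w x y * (f y - f x)))) with
   (/ mu x * (c * sum_list (nbr x) (fun y : V => w x y * (f y - f x)))) by ring.
  f_equal. rewrite <- sum_list_scal. apply sum_list_ext; intros; ring. Qed.

Lemma Lap_opp f x : Lap nbr w mu (fun z => - f z) x = - Lap nbr w mu f x.
Proof. rewrite <- (Lap_ext (fun z => -1 * f z)) by (intros; ring). rewrite Lap_scal. ring. Qed.

Lemma key_identity (f : V -> R) x : (forall z, 0 < f z) ->
  2 * Gam2t nbr w mu f x =
  Lap nbr w mu (fun z => - (f z * Lap nbr w mu f z)) x
  + (Lap nbr w mu f x + Gam nbr w mu f f x / f x) * Lap nbr w mu f x
  + f x * Lap nbr w mu (fun z => Lap nbr w mu f z + Gam nbr w mu f f z / f z) x.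
Proof.
  intros Hf. unfold Gam2t, Gam2.
  rewrite Lap_opp, Lap_plus.
  remember (Gam nbr w mu f f) as GG eqn:HGG.
  unfold Gam.
  rewrite (Lap_ext (fun z => f z * (GG z / f z)) GG) by (intros; field; apply Rgt_not_eq, Hf).
  rewrite (Lap_ext (fun z => Lap nbr w mu f z * f z) (fun z => f z * Lap nbr w mu f z)) by (intros; ring).
  field. apply Rgt_not_eq, Hf.
Qed.
End Gen.


Section Spatial.
Context {V : Type}.
Variable nbr : V -> list V. Variable w : V -> V -> R. Variable mu : V -> R.

Lemma sum_list_lin (l : list V) F G c :
  sum_list l F - c * sum_list l G = sum_list l (fun y => F y - c * G y).
Proof. rewrite <- sum_list_scal. unfold Rminus.
  rewrite <- (Rmult_1_l (sum_list l (fun y => c * G y))) at 1.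
  replace (-(1 * sum_list l (fun y : V => c * G y))) with (-1 * sum_list l (fun y : V => c * G y)) by ring.
  rewrite <- sum_list_scal, <- sum_list_plus. apply sum_list_ext; intros; ring. Qed.

Lemma Gam_sum f x : Gam nbr w mu f f x =
  / mu x * sum_list (nbr x) (fun y => w x y * (f y - f x)^2) / 2.
Proof. unfold Gam, Lap.
  replace ((/ mu x * sum_list (nbr x) (fun y : V => w x y * (f y * f y - f x * f x)) -
   f x * (/ mu x * sum_list (nbr x) (fun y : V => w x y * (f y - f x))) -
   f x * (/ mu x * sum_list (nbr x) (fun y : V => w x y * (f y - f x)))))
  with (/ mu x * (sum_list (nbr x) (fun y : V => w x y * (f y * f y - f x * f x)) -
   (2 * f x) * sum_list (nbr x) (fun y : V => w x y * (f y - f x)))) by ring.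
  rewrite sum_list_lin. f_equal. f_equal. apply sum_list_ext; intros; ring. Qed.

Lemma deg_nonneg x : (forall y, In y (nbr x) -> 0 < w x y) -> 0 <= deg nbr w x.
Proof. intros H; unfold deg. apply sum_list_nonneg. intros z Hz; specialize (H z Hz); lra. Qed.

Lemma Q_upper f y : (forall z, 0 < f z) -> 0 < mu y -> (forall z, In z (nbr y) -> 0 < w y z) ->
  - Lap nbr w mu f y / f y <= deg nbr w y / mu y.
Proof. intros Hf Hm Hw. unfold Lap, deg.
  assert (Hs : - sum_list (nbr y) (fun z => w y z * (f z - f y)) <= f y * sum_list (nbr y) (fun z => w y z)).
  { rewrite <- sum_list_scal. rewrite <- (Rmult_1_l (sum_list (nbr y) (fun z : V => w y z * (f z - f y)))).
    replace (- (1 * sum_list (nbr y) (fun z : V => w y z * (f z - f y)))) with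
      (-1 * sum_list (nbr y) (fun z : V => w y z * (f z - f y))) by ring.
    rewrite <- sum_list_scal. apply sum_list_le. intros z Hz. specialize (Hw z Hz). specialize (Hf z).
    nra. }
  specialize (Hf y).
  apply (Rmult_le_reg_r (f y * mu y)). nra.
  field_simplify; try lra. 

Qed.

Lemma sumS_le0 f x : 0 < mu x -> Lap nbr w mu f x <= 0 ->
  sum_list (nbr x) (fun z => w x z * (f z - f x)) <= 0.
Proof. unfold Lap. intros Hm H.
  set (S := sum_list _ _) in *.
  assert (0 < / mu x) by (apply Rinv_0_lt_compat; lra). nra. Qed.

Lemma nbr_ratio f x y Dw : (forall z, 0 < f z) -> 0 < mu x ->
  (forall z, In z (nbr x) -> 0 < w x z) ->
  (forall z, In z (nbr x) -> deg nbr w x / w x z <= Dw) ->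
  Lap nbr w mu f x <= 0 -> In y (nbr x) -> f y <= Dw * f x.
Proof. intros Hf Hm Hw Hd HL Hy.
  pose proof (sumS_le0 f x Hm HL) as HS.
  assert (E : sum_list (nbr x) (fun z => w x z * f z) =
     sum_list (nbr x) (fun z => w x z * (f z - f x)) + f x * deg nbr w x).
  { unfold deg. rewrite <- sum_list_scal, <- sum_list_plus. apply sum_list_ext; intros; ring. }
  assert (H1 : w x y * f y <= sum_list (nbr x) (fun z => w x z * f z)).
  { apply (sum_list_In_le _ (fun z => w x z * f z)); auto.
    intros z Hz. specialize (Hw z Hz); specialize (Hf z); nra. }
  specialize (Hd y Hy). specialize (Hw y Hy). pose proof (Hf x). pose proof (Hf y).
  assert (deg nbr w x <= Dw * w x y).
  { apply (Rmult_le_reg_r (/ w x y)). apply Rinv_0_lt_compat; lra.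
    replace (Dw * w x y * / w x y) with Dw by (field; lra). exact Hd. }
  apply (Rmult_le_reg_l (w x y)); auto. nra.
Qed.

Lemma Gam_bound f x Dw : (forall z, 0 < f z) -> 0 < mu x ->
  (forall z, In z (nbr x) -> 0 < w x z) ->
  (forall z, In z (nbr x) -> deg nbr w x / w x z <= Dw) -> 0 <= Dw ->
  Lap nbr w mu f x <= 0 ->
  2 * Gam nbr w mu f f x <= (Dw + 1) * (deg nbr w x / mu x) * (f x)^2.
Proof. intros Hf Hm Hw Hd HD HL.
  rewrite Gam_sum.
  pose proof (sumS_le0 f x Hm HL) as HS.
  set (S := sum_list (nbr x) (fun z => w x z * (f z - f x))) in *.
  set (dg := deg nbr w x).
  assert (Hdg : 0 <= dg) by (apply deg_nonneg; auto).
  pose proof (Hf x) as Hfx.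
  assert (HSl : - (f x * dg) <= S).
  { unfold S, dg, deg. rewrite <- sum_list_scal.
    rewrite <- (Rmult_1_l (sum_list (nbr x) (fun y => f x * w x y))).
    replace (- (1 * sum_list (nbr x) (fun y => f x * w x y))) with (-1 * sum_list (nbr x) (fun y => f x * w x y)) by ring.
    rewrite <- sum_list_scal. apply sum_list_le. intros z Hz. specialize (Hw z Hz). specialize (Hf z). nra. }
  assert (HT : sum_list (nbr x) (fun y => w x y * (f y - f x)^2) <=
      (Dw - 2) * f x * S + (Dw - 1) * (f x)^2 * dg).
  { unfold S, dg, deg. rewrite <- !sum_list_scal, <- sum_list_plus.
    apply sum_list_le. intros z Hz.
    pose proof (nbr_ratio f x z Dw Hf Hm Hw Hd HL Hz). specialize (Hw z Hz). specialize (Hf z).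
    assert (H0 : 0 <= (f z - f x + f x) * ((Dw - 1) * f x - (f z - f x))) by nra.
    assert (0 <= w x z * ((f z - f x + f x) * ((Dw - 1) * f x - (f z - f x)))) by (apply Rmult_le_pos; lra).
    simpl. nra. }
  assert (HB : (Dw - 2) * f x * S + (Dw - 1) * (f x)^2 * dg <= (Dw + 1) * (f x)^2 * dg).
  { destruct (Rle_dec 2 Dw). 
    - assert ((Dw - 2) * f x * S <= 0). { assert (0 <= (Dw-2) * f x) by nra. nra. }
      assert (0 <= 2 * (f x ^ 2 * dg)) by (apply Rmult_le_pos; [lra| apply Rmult_le_pos; nra]). nra.
    - assert ((Dw - 2) * f x * S <= (2 - Dw) * (f x)^2 * dg).
      { assert (0 <= (2 - Dw) * f x) by nra.
        assert ((2 - Dw) * f x * (- S) <= (2 - Dw) * f x * (f x * dg)) by (apply Rmult_le_compat_l; lra).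
        replace ((Dw - 2) * f x * S) with ((2 - Dw) * f x * (- S)) by ring.
        replace ((2 - Dw) * f x ^ 2 * dg) with ((2 - Dw) * f x * (f x * dg)) by ring. lra. }
      assert (0 <= Dw * (f x ^ 2 * dg)) by (apply Rmult_le_pos; [lra| apply Rmult_le_pos; nra]). nra. }
  assert (0 < / mu x) by (apply Rinv_0_lt_compat; lra).
  set (T := sum_list (nbr x) (fun y : V => w x y * (f y - f x) ^ 2)) in *.
  assert (/ mu x * T <= / mu x * ((Dw + 1) * f x ^ 2 * dg)) by (apply Rmult_le_compat_l; lra).
  unfold Rdiv. 
  replace (2 * (/ mu x * T * / 2)) with (/ mu x * T) by (field; lra).
  replace ((Dw + 1) * (dg * / mu x) * f x ^ 2) with (/ mu x * ((Dw + 1) * f x ^ 2 * dg)) by ring.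
  lra.
Qed.
End Spatial.


Section Core.
Context {V : Type}.
Variable nbr : V -> list V. Variable w : V -> V -> R. Variable mu : V -> R.

Lemma LapP_bound (f : V -> R) x s Dw E0 :
  (forall z, 0 < f z) -> 0 < mu x ->
  (forall z, In z (nbr x) -> 0 < w x z) ->
  (forall z, In z (nbr x) -> deg nbr w x / w x z <= Dw) -> 0 <= Dw -> 0 < s -> 0 <= E0 ->
  Lap nbr w mu f x <= 0 ->
  (forall y, In y (nbr x) -> s * (- Lap nbr w mu f y / f y - - Lap nbr w mu f x / f x) <= E0) ->
  s * Lap nbr w mu (fun z => - (f z * Lap nbr w mu f z)) x <=
  s * (- Lap nbr w mu f x / f x) * Lap nbr w mu (fun z => f z * f z) x
  + (deg nbr w x / mu x) * Dw^2 * (f x)^2 * E0.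
Proof. intros Hf Hm Hw Hd HD Hs HE HL Hsp.
  set (Q := fun y => - Lap nbr w mu f y / f y).
  assert (Hm' : 0 < / mu x) by (apply Rinv_0_lt_compat; lra).
  assert (E : Lap nbr w mu (fun z => - (f z * Lap nbr w mu f z)) x - Q x * Lap nbr w mu (fun z => f z * f z) x
     = / mu x * sum_list (nbr x) (fun y => w x y * ((f y)^2 * (Q y - Q x)))).
  { unfold Lap at 1 3. 
    replace (/ mu x * sum_list (nbr x) (fun y : V => w x y * (- (f y * Lap nbr w mu f y) - - (f x * Lap nbr w mu f x))) -
      Q x * (/ mu x * sum_list (nbr x) (fun y : V => w x y * (f y * f y - f x * f x)))) with
     (/ mu x * (sum_list (nbr x) (fun y : V => w x y * (- (f y * Lap nbr w mu f y) - - (f x * Lap nbr w mu f x))) -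
      Q x * sum_list (nbr x) (fun y : V => w x y * (f y * f y - f x * f x)))) by ring.
    rewrite sum_list_lin. f_equal. apply sum_list_ext. intros y _. unfold Q.
    pose proof (Hf x); pose proof (Hf y). field; lra. }
  assert (HS : s * sum_list (nbr x) (fun y => w x y * ((f y)^2 * (Q y - Q x))) <=
      deg nbr w x * (Dw^2 * (f x)^2 * E0)).
  { rewrite <- sum_list_scal. unfold deg. rewrite Rmult_comm, <- sum_list_scal.
    apply sum_list_le. intros y Hy.
    pose proof (nbr_ratio nbr w mu f x y Dw Hf Hm Hw Hd HL Hy) as Hr.
    specialize (Hsp y Hy). specialize (Hw y Hy). pose proof (Hf y). pose proof (Hf x).
    fold Q in Hsp.
    assert (f y ^ 2 <= Dw ^ 2 * f x ^ 2) by (simpl; nra).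
    assert (s * (f y ^ 2 * (Q y - Q x)) <= f y ^ 2 * E0).
    { replace (s * (f y ^ 2 * (Q y - Q x))) with (f y ^ 2 * (s * (Q y - Q x))) by ring.
      apply Rmult_le_compat_l; [nra | exact Hsp]. }
    assert (f y ^ 2 * E0 <= Dw ^ 2 * f x ^ 2 * E0) by (apply Rmult_le_compat_r; lra).
    replace (s * (w x y * (f y ^ 2 * (Q y - Q x)))) with (w x y * (s * (f y ^ 2 * (Q y - Q x)))) by ring.
    replace (Dw ^ 2 * f x ^ 2 * E0 * w x y) with (w x y * (Dw ^ 2 * f x ^ 2 * E0)) by ring.
    apply Rmult_le_compat_l; lra. }
  fold (Q x).
  assert (s * (Lap nbr w mu (fun z => - (f z * Lap nbr w mu f z)) x - Q x * Lap nbr w mu (fun z => f z * f z) x)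
     <= deg nbr w x / mu x * Dw ^ 2 * f x ^ 2 * E0).
  { rewrite E. replace (s * (/ mu x * sum_list (nbr x) (fun y : V => w x y * (f y ^ 2 * (Q y - Q x)))))
      with (/ mu x * (s * sum_list (nbr x) (fun y : V => w x y * (f y ^ 2 * (Q y - Q x))))) by ring.
    replace (deg nbr w x / mu x * Dw ^ 2 * f x ^ 2 * E0) with (/ mu x * (deg nbr w x * (Dw ^ 2 * f x ^ 2 * E0))) by (field; lra).
    apply Rmult_le_compat_l; lra. }
  nra.
Qed.

Lemma fp_eq (f : V -> R) y : 0 < f y ->
  Lap nbr w mu (fun z => f z * f z) y / (2 * f y) = Lap nbr w mu f y + Gam nbr w mu f f y / f y.
Proof. intros H. unfold Gam. field. lra. Qed.

Lemma core (f : V -> R) x s n K Dw E0 :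
  (forall z, 0 < f z) -> 0 < mu x ->
  (forall z, In z (nbr x) -> 0 < w x z) ->
  (forall z, In z (nbr x) -> deg nbr w x / w x z <= Dw) -> 0 <= Dw -> 0 < n -> 0 < s -> 0 <= E0 ->
  Gam2t nbr w mu f x >= / n * (Lap nbr w mu f x) ^ 2 + - K * Gam nbr w mu f f x ->
  Lap nbr w mu f x <= 0 ->
  (forall y, In y (nbr x) -> s * (- Lap nbr w mu f y / f y - - Lap nbr w mu f x / f x) <= E0) ->
  0 <= - Lap nbr w mu f x / f x + s * ((- Lap nbr w mu (fun y => Lap nbr w mu (fun z => f z * f z) y / (2 * f y)) x * f x
          - (- Lap nbr w mu f x) * (Lap nbr w mu (fun z => f z * f z) x / (2 * f x))) / (f x)^2) ->
  2 / n * (s * (- Lap nbr w mu f x / f x))^2 - s * (- Lap nbr w mu f x / f x)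
   <= s^2 * K * (2 * Gam nbr w mu f f x / (f x)^2) + s * (deg nbr w x / mu x * Dw^2 * E0).
Proof. intros Hf Hm Hw Hd HD Hn Hs HE HC HL Hsp HT.
  pose proof (LapP_bound f x s Dw E0 Hf Hm Hw Hd HD Hs HE HL Hsp) as HP.
  pose proof (key_identity nbr w mu f x Hf) as HK.
  rewrite (Lap_ext nbr w mu (fun y => Lap nbr w mu (fun z => f z * f z) y / (2 * f y))
      (fun z => Lap nbr w mu f z + Gam nbr w mu f f z / f z)) in HT by (intros; apply fp_eq; auto).
  pose proof (Hf x) as HF.
  rewrite (fp_eq f x HF) in HT.
  assert (Hv : Lap nbr w mu (fun z => f z * f z) x = 2 * f x * (Lap nbr w mu f x + Gam nbr w mu f f x / f x)).
  { rewrite <- fp_eq by auto. field. lra. }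
  rewrite Hv in HP.
  set (a := Lap nbr w mu f x) in *.
  set (G := Gam nbr w mu f f x) in *.
  set (b := Lap nbr w mu (fun z : V => Lap nbr w mu f z + Gam nbr w mu f f z / f z) x) in *.
  set (L := Lap nbr w mu (fun z : V => - (f z * Lap nbr w mu f z)) x) in *.
  set (Gt := Gam2t nbr w mu f x) in *.
  set (F := f x) in *.
  set (X := deg nbr w x / mu x * Dw ^ 2 * F ^ 2 * E0) in *.
  set (c := a + G / F) in *.
  assert (H1 : s * (2 / n * a ^ 2 - 2 * K * G) <= - a * F + X).
  { assert (H2 : 2 * s * Gt >= s * (2 / n * a ^ 2 - 2 * K * G)).
    { replace (s * (2 / n * a ^ 2 - 2 * K * G)) with (2 * s * (/ n * a ^ 2 + - K * G)) by (field; lra).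
      apply Rle_ge, Rmult_le_compat_l; lra. }
    assert (H3 : 2 * s * Gt = s * L + s * c * a + s * F * b) by (replace (2 * s * Gt) with (s * (2 * Gt)) by ring; rewrite HK; unfold c; ring).
    assert (H4 : s * (- a / F) * (2 * F * c) = - 2 * s * a * c) by (field; lra).
    assert (H5 : 0 <= - a * F + s * (- b * F + a * c)).
    { assert (H6 : - a / F + s * ((- b * F - - a * c) / F ^ 2) = (- a * F + s * (- b * F + a * c)) / F ^ 2) by (field; lra).
      rewrite H6 in HT. 
      assert (0 < F ^ 2) by (simpl; nra).
      apply (Rmult_le_reg_r (/ F ^ 2)). apply Rinv_0_lt_compat; lra. rewrite Rmult_0_l. exact HT. }
    lra. }
  assert (H7 : 2 / n * (s * (- a / F)) ^ 2 - s * (- a / F) = (s / F^2) * (s * (2 / n * a ^ 2) - (- a * F))) by (field; lra).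
  assert (H8 : s ^ 2 * K * (2 * G / F ^ 2) + s * (deg nbr w x / mu x * Dw ^ 2 * E0) = (s / F^2) * (s * (2 * K * G) + X)) by (unfold X; field; lra).
  rewrite H7, H8.
  apply Rmult_le_compat_l. assert (0 < F ^ 2) by (simpl; nra). apply Rmult_le_pos; [lra|]. left; apply Rinv_0_lt_compat; lra.
  lra.
Qed.
End Core.


Lemma D_plus (f g : R -> R) t a b : is_derive f t a -> is_derive g t b ->
  is_derive (fun s => f s + g s) t (a + b).
Proof. intros. apply (is_derive_plus f g t a b); auto. Qed.

Lemma D_minus (f g : R -> R) t a b : is_derive f t a -> is_derive g t b ->
  is_derive (fun s => f s - g s) t (a - b).
Proof. intros. apply (is_derive_minus f g t a b); auto. Qed.

Lemma D_mult (f g : R -> R) t a b : is_derive f t a -> is_derive g t b ->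
  is_derive (fun s => f s * g s) t (a * g t + f t * b).
Proof. intros. apply (is_derive_mult f g t a b); auto. intros; apply Rmult_comm. Qed.

Lemma D_const (c t : R) : is_derive (fun _ => c) t 0.
Proof. apply (is_derive_const c t). Qed.

Lemma D_id t : is_derive (fun s => s) t 1.
Proof. apply (is_derive_id t). Qed.

Lemma D_sum {V : Type} (l : list V) (F : V -> R -> R) dF t :
  (forall y, In y l -> is_derive (F y) t (dF y)) ->
  is_derive (fun s => sum_list l (fun y => F y s)) t (sum_list l dF).
Proof. induction l; simpl; intros H.
  - apply D_const.
  - apply D_plus; auto. Qed.

Lemma D_Lap {V : Type} nbr w (mu : V -> R) (F : V -> R -> R) dF x t :
  (forall y, is_derive (F y) t (dF y)) ->
  is_derive (fun s => Lap nbr w mu (fun y => F y s) x) t (Lap nbr w mu dF x).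
Proof. intros H. unfold Lap.
  apply (is_derive_ext (fun s => / mu x * sum_list (nbr x) (fun y => w x y * (F y s - F x s)))); [reflexivity|].
  apply is_derive_scal. apply (D_sum (nbr x) (fun y s => w x y * (F y s - F x s))).
  intros y _. apply is_derive_scal. apply D_minus; auto. Qed.

Lemma D_sqrt (f : R -> R) t df : is_derive f t df -> 0 < f t ->
  is_derive (fun s => sqrt (f s)) t (df / (2 * sqrt (f t))).
Proof. intros; apply is_derive_sqrt; auto. Qed.

Lemma deriv_left_max (g : R -> R) t1 l r : is_derive g t1 l -> 0 < r ->
  (forall t, t1 - r < t < t1 -> g t <= g t1) -> 0 <= l.
Proof. intros Hd Hr Hm. apply is_derive_Reals in Hd.
  destruct (Rle_dec 0 l) as [|Hl]; auto. exfalso.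
  assert (Hl' : 0 < - l) by lra.
  destruct (Hd (- l) Hl') as [d Hd'].
  set (h := - Rmin (d / 2) (r / 2)).
  assert (Hd0 : 0 < d) by apply (cond_pos d).
  assert (Hmin : 0 < Rmin (d / 2) (r / 2)) by (apply Rmin_glb_lt; lra).
  assert (Hh : h < 0) by (unfold h; lra).
  assert (Habs : Rabs h < d).
  { rewrite Rabs_left by lra. unfold h. pose proof (Rmin_l (d/2) (r/2)). lra. }
  specialize (Hd' h (Rlt_not_eq _ _ Hh) Habs).
  assert (Hg : g (t1 + h) <= g t1).
  { apply Hm. pose proof (Rmin_r (d/2) (r/2)). unfold h in *. lra. }
  assert (0 <= (g (t1 + h) - g t1) / h).
  { unfold Rdiv. replace ((g (t1 + h) - g t1) * / h) with ((g t1 - g (t1 + h)) * / (- h)) by (field; lra).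
    apply Rmult_le_pos; [lra|]. left; apply Rinv_0_lt_compat; lra. }
  rewrite Rabs_right in Hd' by lra. lra.
Qed.

Lemma finite_max {V : Type} (S : list V) (x : V) (g : V -> R -> R) a b : a <= b ->
  (forall y, In y (x :: S) -> forall c, a <= c <= b -> continuity_pt (g y) c) ->
  exists x1 t1, In x1 (x :: S) /\ a <= t1 <= b /\
    forall y t, In y (x :: S) -> a <= t <= b -> g y t <= g x1 t1.
Proof. intros Hab. revert x. induction S as [|z S IH]; intros x Hc.
  - destruct (continuity_ab_maj (g x) a b Hab) as [M [HM HMab]].
    { intros; apply Hc; simpl; auto. }
    exists x, M. split; [simpl; auto|]. split; auto.
    intros y t [<-|[]] Ht. auto.
  - destruct (IH z) as [x2 [t2 [Hx2 [Ht2 H2]]]].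
    { intros y Hy; apply Hc; simpl in *; auto. }
    destruct (continuity_ab_maj (g x) a b Hab) as [M [HM HMab]].
    { intros; apply Hc; simpl; auto. }
    destruct (Rle_dec (g x M) (g x2 t2)).
    + exists x2, t2. split; [simpl; auto|]. split; auto.
      intros y t [<-|Hy] Ht. specialize (HM t Ht); lra. apply H2; auto.
    + exists x, M. split; [simpl; auto|]. split; auto.
      intros y t [<-|Hy] Ht. auto. specialize (H2 y t Hy Ht). lra.
Qed.


Section Cutoff.
Context {V : Type}.
Variable nbr : V -> list V. Variable x0 : V. Variable eps : R.

Fixpoint gball (k : nat) : list V :=
  match k with O => x0 :: nil | S k => gball k ++ flat_map nbr (gball k) end.

Definition term (k : nat) (x : V) : R :=
  if excluded_middle_informative (In x (gball k)) then 1 - eps * INR k else 0.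

Fixpoint phi_aux (k : nat) (x : V) : R :=
  match k with O => term O x | S k' => Rmax (phi_aux k' x) (term (S k') x) end.

Lemma ball_mono k m x : (k <= m)%nat -> In x (gball k) -> In x (gball m).
Proof. induction 1; auto. intros Hx. simpl. apply in_or_app; left; auto. Qed.

Lemma ball_step k x y : In x (gball k) -> In y (nbr x) -> In y (gball (S k)).
Proof. intros. simpl. apply in_or_app; right. apply in_flat_map. eauto. Qed.

Lemma phi_ge_term j k x : (j <= k)%nat -> term j x <= phi_aux k x.
Proof. induction 1; simpl.
  - destruct j; simpl; [lra|]. apply Rmax_r.
  - eapply Rle_trans; [exact IHle| apply Rmax_l]. Qed.

Lemma phi_le k x M : (forall j, (j <= k)%nat -> term j x <= M) -> phi_aux k x <= M.
Proof. induction k; simpl; intros H. apply H; lia.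
  apply Rmax_lub. apply IHk; intros; apply H; lia. apply H; lia. Qed.

Hypothesis Heps : 0 < eps.

Lemma term_le1 j x : term j x <= 1.
Proof. unfold term. destruct excluded_middle_informative; [|lra].
  pose proof (pos_INR j). nra. Qed.

Lemma phi_nonneg k x : 0 <= phi_aux k x.
Proof. eapply Rle_trans; [|apply (phi_ge_term 0)]; [|lia]. unfold term.
  destruct excluded_middle_informative; simpl; lra. Qed.

Lemma phi_le1 k x : phi_aux k x <= 1.
Proof. apply phi_le. intros; apply term_le1. Qed.

Lemma phi_x0 k : phi_aux k x0 = 1.
Proof. apply Rle_antisym. apply phi_le1.
  eapply Rle_trans; [|apply (phi_ge_term 0)]; [|lia]. unfold term.
  destruct excluded_middle_informative as [_|n0]; simpl. lra. exfalso; apply n0; simpl; auto. Qed.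

Lemma phi_support k x : 0 < phi_aux k x -> In x (gball k).
Proof. intros H. destruct (classic (In x (gball k))) as [|Hn]; auto.
  exfalso. assert (phi_aux k x <= 0); [|lra].
  apply phi_le. intros j Hj. unfold term. destruct excluded_middle_informative as [Hi|]; [|lra].
  exfalso; apply Hn. eapply ball_mono; eauto. Qed.

Lemma phi_lip N x y : 1 <= eps * INR N -> In y (nbr x) -> phi_aux N x - eps <= phi_aux N y.
Proof. intros HN Hy.
  assert (phi_aux N x <= phi_aux N y + eps); [|lra].
  apply phi_le. intros j Hj. unfold term at 1.
  pose proof (phi_nonneg N y).
  destruct excluded_middle_informative as [Hi|]; [|lra].
  destruct (Nat.eq_dec j N) as [->|Hne].
  - lra.
  - assert (term (S j) y <= phi_aux N y) by (apply phi_ge_term; lia).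
    unfold term in H0. destruct excluded_middle_informative as [_|Hn].
    + rewrite S_INR in H0. lra.
    + exfalso; apply Hn. eapply ball_step; eauto.
Qed.
End Cutoff.


Lemma quad n A H : 0 < n -> 0 <= A -> 2 / n * H ^ 2 - H <= A -> H <= n / 2 + sqrt (n / 2 * A).
Proof. intros Hn HA HH.
  assert (Hp : 0 <= n / 2 * A) by (apply Rmult_le_pos; lra).
  pose proof (sqrt_pos (n / 2 * A)) as Hr. pose proof (sqrt_sqrt _ Hp) as Hr2.
  set (r := sqrt (n / 2 * A)) in *.
  destruct (Rle_dec H (n / 2 + r)) as [|Hc]; auto. exfalso.
  assert (Hc' : n / 2 + r < H) by lra.
  assert (E1 : 2 / n * H ^ 2 - H = H * (2 / n * H - 1)) by (field; lra).
  assert (E2 : 2 / n * H - 1 > 2 / n * r).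
  { apply Rmult_lt_compat_l with (r := 2 / n) in Hc'. 
    replace (2 / n * (n / 2 + r)) with (1 + 2 / n * r) in Hc' by (field; lra). lra.
    apply Rdiv_lt_0_compat; lra. }
  assert (E3 : A = 2 / n * (r * r)) by (rewrite Hr2; field; lra).
  assert (0 <= 2 / n * r) by (apply Rmult_le_pos; [left; apply Rdiv_lt_0_compat; lra| lra]).
  assert (H * (2 / n * H - 1) > r * (2 / n * r)).
  { apply Rle_lt_trans with (H * (2 / n * r)).
    apply Rmult_le_compat_r; lra. apply Rmult_lt_compat_l; lra. }
  lra.
Qed.

Lemma step (V : Type) (nbr : V -> list V) (w : V -> V -> R) (mu : V -> R) (n K Dmu Dw : R)
  (u : V -> R -> R) (x0 : V) (T d e : R) :
  (forall x y, In y (nbr x) -> 0 < w x y) -> (forall x, 0 < mu x) ->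
  0 < n -> 0 < K -> CDE nbr w mu n (- K) ->
  (forall x, deg nbr w x / mu x <= Dmu) -> 0 <= Dmu ->
  (forall x y, In y (nbr x) -> deg nbr w x / w x y <= Dw) -> 0 <= Dw ->
  (forall x t, 0 < t -> 0 < u x t) ->
  (forall x t, 0 < t -> is_derive (u x) t (Lap nbr w mu (fun y => u y t) x)) ->
  0 < d < T -> 0 < e ->
  (T - d) * (- Lap nbr w mu (fun y => sqrt (u y T)) x0 / sqrt (u x0 T))
   <= n / 2 + sqrt (n / 2 * (T ^ 2 * K * (Dw + 1) * Dmu + T * Dmu * Dw ^ 2 * (2 * e * T ^ 2 * Dmu ^ 2 / n))).
Proof.
  intros Hw Hmu Hn HK HCDE Hdmu HDmu Hdw HDw Hpos Hder Hd He.
  set (E0 := 2 * e * T ^ 2 * Dmu ^ 2 / n).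
  assert (HE0 : 0 <= E0).
  { unfold E0. apply Rmult_le_pos; [|left; apply Rinv_0_lt_compat; lra].
    assert (0 <= T ^ 2) by (apply pow2_ge_0). assert (0 <= Dmu ^ 2) by (apply pow2_ge_0).
    apply Rmult_le_pos; [|lra]. apply Rmult_le_pos; [|lra]. lra. }
  set (A0 := T ^ 2 * K * (Dw + 1) * Dmu + T * Dmu * Dw ^ 2 * E0).
  assert (HA0 : 0 <= A0).
  { unfold A0. assert (0 <= T ^ 2) by (apply pow2_ge_0). assert (0 <= Dw ^ 2) by (apply pow2_ge_0).
    assert (0 <= T ^ 2 * K) by (apply Rmult_le_pos; lra).
    assert (0 <= T ^ 2 * K * (Dw + 1)) by (apply Rmult_le_pos; lra).
    assert (0 <= T * Dmu) by (apply Rmult_le_pos; lra).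
    assert (0 <= T * Dmu * Dw ^ 2) by (apply Rmult_le_pos; lra).
    apply Rplus_le_le_0_compat; apply Rmult_le_pos; lra. }
  assert (Hsq0 : 0 <= sqrt (n / 2 * A0)) by apply sqrt_pos.
  destruct (INR_archimed e 1) as [N HN]; [lra|].
  set (phi := phi_aux nbr x0 e N).
  set (f := fun t y => sqrt (u y t)).
  set (Q := fun t y => - Lap nbr w mu (f t) y / f t y).
  set (Phi := fun y t => phi y * ((t - d) * Q t y)).
  assert (Hf : forall t y, 0 < t -> 0 < f t y) by (intros; unfold f; apply sqrt_lt_R0; auto).
  set (fp := fun t y => Lap nbr w mu (fun z => u z t) y / (2 * sqrt (u y t))).
  assert (HdQ : forall y t, 0 < t -> is_derive (fun s => Q s y) t
     ((- Lap nbr w mu (fp t) y * f t y - (- Lap nbr w mu (f t) y) * fp t y) / (f t y) ^ 2)).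
  { intros y t Ht. unfold Q.
    apply (is_derive_div (fun s => - Lap nbr w mu (f s) y) (fun s => f s y)).
    - apply (is_derive_ext (fun s => -1 * Lap nbr w mu (fun z => sqrt (u z s)) y)); [intros t0; unfold f; change (-1 * Lap nbr w mu (fun z : V => sqrt (u z t0)) y = - Lap nbr w mu (fun z => sqrt (u z t0)) y); ring|].
      replace (- Lap nbr w mu (fp t) y) with (-1 * Lap nbr w mu (fp t) y) by ring.
      apply is_derive_scal. apply (D_Lap nbr w mu (fun z s => sqrt (u z s))).
      intros z. unfold fp. apply D_sqrt; auto.
    - unfold f, fp. apply D_sqrt; auto.
    - apply Rgt_not_eq, Hf; auto. }
  assert (HdPhi : forall y t, 0 < t -> is_derive (Phi y) t
     (phi y * (1 * Q t y + (t - d) * ((- Lap nbr w mu (fp t) y * f t y - (- Lap nbr w mu (f t) y) * fp t y) / (f t y) ^ 2)))).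
  { intros y t Ht. unfold Phi. apply is_derive_scal.
    replace (1 * Q t y) with ((1 - 0) * Q t y) by ring.
    apply (D_mult (fun s => s - d) (fun s => Q s y)); [apply D_minus; [apply D_id| apply D_const]|]. auto. }
  assert (Hcont : forall y, In y (x0 :: gball nbr x0 N) -> forall c, d <= c <= T -> continuity_pt (Phi y) c).
  { intros y _ c Hc. apply continuity_pt_filterlim. apply (ex_derive_continuous (Phi y) c).
    eexists. apply HdPhi. lra. }
  destruct (finite_max (gball nbr x0 N) x0 Phi d T) as [x1 [t1 [Hx1 [Ht1 Hmax]]]]; [lra| exact Hcont|].
  assert (HM0 : Phi x0 T <= Phi x1 t1) by (apply Hmax; [simpl; auto| split; lra]).
  assert (Hphi0 : phi x0 = 1) by (apply phi_x0; auto).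
  change ((T - d) * Q T x0 <= n / 2 + sqrt (n / 2 * A0)).
  assert (E : Phi x0 T = (T - d) * Q T x0) by (unfold Phi; rewrite Hphi0; ring).
  rewrite <- E.
  destruct (Rle_dec (Phi x1 t1) (n / 2)) as [Hle|Hgt]; [lra|].
  apply Rnot_le_lt in Hgt.
  set (M := Phi x1 t1) in *.
  set (p := phi x1).
  assert (Hp0 : 0 <= p) by (apply phi_nonneg; auto).
  assert (Hp1 : p <= 1) by (apply phi_le1; auto).
  assert (Hst : d < t1).
  { destruct (Rle_lt_dec t1 d) as [Hc|]; auto. assert (t1 = d) by lra. subst t1.
    unfold M, Phi in Hgt. replace (d - d) with 0 in Hgt by ring. lra. }
  set (s := t1 - d).
  assert (Hs : 0 < s) by (unfold s; lra).
  assert (Hs' : s <= T) by (unfold s; lra).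
  assert (Ht1p : 0 < t1) by lra.
  set (H1 := s * Q t1 x1).
  assert (HMe : M = p * H1) by (unfold M, Phi, H1, p, s; ring).
  assert (HH1 : 0 < H1).
  { destruct (Rle_lt_dec H1 0) as [Hc|]; auto. assert (p * H1 <= 0) by nra. lra. }
  assert (Hpp : 0 < p).
  { destruct (Rle_lt_dec p 0) as [Hc|]; auto. assert (p = 0) by lra. rewrite HMe in Hgt. nra. }
  assert (HMH : M <= H1) by (rewrite HMe; nra).
  assert (HQup : forall y, Q t1 y <= Dmu).
  { intros y. eapply Rle_trans; [apply Q_upper| apply Hdmu]; auto. }
  assert (HQx1 : 0 < Q t1 x1) by (unfold H1 in HH1; nra).
  assert (HL : Lap nbr w mu (f t1) x1 <= 0).
  { unfold Q in HQx1. pose proof (Hf t1 x1 Ht1p).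
    destruct (Rle_lt_dec (Lap nbr w mu (f t1) x1) 0) as [|Hc]; auto.
    assert (0 < Lap nbr w mu (f t1) x1 / f t1 x1) by (apply Rdiv_lt_0_compat; auto). 
    unfold Rdiv in *. lra. }
  assert (Hsp_all : forall y, Phi y t1 <= M).
  { intros y. destruct (classic (In y (x0 :: gball nbr x0 N))) as [Hi|Hni].
    - apply Hmax; auto.
    - assert (phi y = 0).
      { pose proof (phi_nonneg nbr x0 e N y) as Hq; fold phi in Hq. destruct (Rle_lt_dec (phi y) 0) as [|Hc]; [lra|].
        exfalso; apply Hni; right; apply (phi_support nbr x0 e N y Hc). }
      unfold Phi. rewrite H. lra. }
  assert (Hloc : forall y, In y (nbr x1) -> s * (Q t1 y - Q t1 x1) <= E0).
  { intros y Hy.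
    assert (Hlip : p - e <= phi y) by (apply phi_lip; auto; lra).
    pose proof (Hsp_all y) as Hy'. unfold Phi in Hy'. fold s in Hy'.
    pose proof (phi_nonneg nbr x0 e N y) as Hpy. fold phi in Hpy.
    assert (HH1' : 0 < s * Q t1 x1) by exact HH1.
    destruct (Rle_lt_dec (s * Q t1 y) (s * Q t1 x1)) as [Hc|Hc].
    - assert (s * (Q t1 y - Q t1 x1) <= 0) by lra. lra.
    - assert (HsQy : s * Q t1 y <= T * Dmu).
      { pose proof (HQup y). assert (0 <= Q t1 y) by nra. nra. }
      assert (Hk : p * (s * Q t1 y - s * Q t1 x1) <= e * (T * Dmu)).
      { assert (phi y * (s * Q t1 y) <= p * (s * Q t1 x1)) by (rewrite HMe in Hy'; unfold H1 in Hy'; lra).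
        assert ((p - phi y) * (s * Q t1 y) <= e * (s * Q t1 y)) by (apply Rmult_le_compat_r; lra).
        assert (e * (s * Q t1 y) <= e * (T * Dmu)) by (apply Rmult_le_compat_l; lra).
        lra. }
      assert (HpT : n / 2 < p * (T * Dmu)).
      { assert (H1 <= s * Dmu) by (unfold H1; apply Rmult_le_compat_l; [lra| apply HQup]).
        assert (s * Dmu <= T * Dmu) by (apply Rmult_le_compat_r; lra).
        assert (p * H1 <= p * (T * Dmu)) by (apply Rmult_le_compat_l; lra). lra. }
      set (D := s * Q t1 y - s * Q t1 x1) in *.
      assert (HD : 0 < D) by (unfold D; lra).
      assert (D * n <= 2 * (T * Dmu) * (e * (T * Dmu))).
      { apply Rle_trans with (D * (2 * (p * (T * Dmu)))). apply Rmult_le_compat_l; lra.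
        replace (D * (2 * (p * (T * Dmu)))) with (2 * (T * Dmu) * (p * D)) by ring.
        apply Rmult_le_compat_l. assert (0 <= T * Dmu) by (apply Rmult_le_pos; lra). lra. lra. }
      replace (s * (Q t1 y - Q t1 x1)) with D by (unfold D; ring).
      unfold E0. apply (Rmult_le_reg_r n); auto.
      replace (2 * e * T ^ 2 * Dmu ^ 2 / n * n) with (2 * (T * Dmu) * (e * (T * Dmu))) by (field; lra). lra. }
  set (F := f t1).
  assert (HfF : forall z, 0 < F z) by (intros; apply Hf; lra).
  assert (Hfp : forall y, fp t1 y = Lap nbr w mu (fun z => F z * F z) y / (2 * F y)).
  { intros y. unfold fp. f_equal. apply Lap_ext. intros z. unfold F, f. rewrite sqrt_sqrt; auto. left; auto. }
  assert (Htime : 0 <= p * (1 * Q t1 x1 + (t1 - d) * ((- Lap nbr w mu (fp t1) x1 * f t1 x1 - (- Lap nbr w mu (f t1) x1) * fp t1 x1) / (f t1 x1) ^ 2))).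
  { apply (deriv_left_max (Phi x1) t1 _ s); [apply HdPhi; lra| exact Hs|].
    intros t Ht. apply Hmax; auto. unfold s in Ht. lra. }
  rewrite (Lap_ext nbr w mu (fp t1) (fun y => Lap nbr w mu (fun z => F z * F z) y / (2 * F y))) in Htime by exact Hfp.
  rewrite (Hfp x1) in Htime. fold F in Htime. fold s in Htime.
  assert (HT' : 0 <= - Lap nbr w mu F x1 / F x1 + s * ((- Lap nbr w mu (fun y => Lap nbr w mu (fun z => F z * F z) y / (2 * F y)) x1 * F x1
          - (- Lap nbr w mu F x1) * (Lap nbr w mu (fun z => F z * F z) x1 / (2 * F x1))) / (F x1)^2)).
  { apply (Rmult_le_reg_l p); auto. rewrite Rmult_0_r. 
    replace (- Lap nbr w mu F x1 / F x1) with (1 * Q t1 x1) by (unfold Q; fold F; ring). exact Htime. }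
  assert (HC := HCDE F HfF x1).
  pose proof (core nbr w mu F x1 s n K Dw E0 HfF (Hmu x1) (Hw x1) (Hdw x1) HDw Hn Hs HE0 HC HL Hloc HT') as Hcore.
  pose proof (Gam_bound nbr w mu F x1 Dw HfF (Hmu x1) (Hw x1) (Hdw x1) HDw HL) as HGb.
  pose proof (HfF x1) as HF1.
  assert (HF2 : 0 < F x1 ^ 2) by (simpl; nra).
  assert (Hdm1 := Hdmu x1).
  assert (Hdm0 : 0 <= deg nbr w x1 / mu x1).
  { apply Rmult_le_pos. apply deg_nonneg; auto. left; apply Rinv_0_lt_compat; auto. }
  assert (HG2 : 2 * Gam nbr w mu F F x1 / F x1 ^ 2 <= (Dw + 1) * Dmu).
  { apply (Rmult_le_reg_r (F x1 ^ 2)); auto.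
    replace (2 * Gam nbr w mu F F x1 / F x1 ^ 2 * F x1 ^ 2) with (2 * Gam nbr w mu F F x1) by (field; lra).
    apply Rle_trans with ((Dw + 1) * (deg nbr w x1 / mu x1) * F x1 ^ 2); auto.
    apply Rmult_le_compat_r; [lra|]. apply Rmult_le_compat_l; lra. }
  assert (HA : s ^ 2 * K * (2 * Gam nbr w mu F F x1 / F x1 ^ 2) + s * (deg nbr w x1 / mu x1 * Dw ^ 2 * E0) <= A0).
  { unfold A0.
    assert (Hs2 : s ^ 2 <= T ^ 2) by (simpl; nra).
    apply Rplus_le_compat.
    - apply Rle_trans with (s ^ 2 * K * ((Dw + 1) * Dmu)).
      + apply Rmult_le_compat_l; [|exact HG2]. apply Rmult_le_pos; [apply pow2_ge_0| lra].
      + replace (T ^ 2 * K * (Dw + 1) * Dmu) with (T ^ 2 * K * ((Dw + 1) * Dmu)) by ring.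
        apply Rmult_le_compat_r; [apply Rmult_le_pos; lra|]. apply Rmult_le_compat_r; lra.
    - replace (T * Dmu * Dw ^ 2 * E0) with (T * (Dmu * Dw ^ 2 * E0)) by ring.
      assert (0 <= Dw ^ 2) by apply pow2_ge_0.
      assert (deg nbr w x1 / mu x1 * Dw ^ 2 * E0 <= Dmu * Dw ^ 2 * E0).
      { apply Rmult_le_compat_r; auto. apply Rmult_le_compat_r; auto. }
      assert (0 <= deg nbr w x1 / mu x1 * Dw ^ 2 * E0) by (apply Rmult_le_pos; auto; apply Rmult_le_pos; auto).
      apply Rle_trans with (s * (Dmu * Dw ^ 2 * E0)). apply Rmult_le_compat_l; lra.
      apply Rmult_le_compat_r; lra. }
  assert (Hq : 2 / n * H1 ^ 2 - H1 <= A0).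
  { unfold H1. eapply Rle_trans; [|exact HA]. exact Hcore. }
  pose proof (quad n A0 H1 Hn HA0 Hq). lra.
Qed.


Lemma sqrt_add_le a b : 0 <= a -> 0 <= b -> sqrt (a + b) <= sqrt a + sqrt b.
Proof. intros Ha Hb. pose proof (sqrt_pos a). pose proof (sqrt_pos b).
  rewrite <- (sqrt_pow2 (sqrt a + sqrt b)) by lra. apply sqrt_le_1_alt.
  replace ((sqrt a + sqrt b) ^ 2) with (sqrt a * sqrt a + sqrt b * sqrt b + 2 * sqrt a * sqrt b) by ring.
  rewrite !sqrt_sqrt by auto. assert (0 <= sqrt a * sqrt b) by (apply Rmult_le_pos; auto). lra. Qed.

Lemma lim_e X Y c : 0 <= c -> (forall e, 0 < e -> X <= Y + sqrt (c * e)) -> X <= Y.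
Proof. intros Hc H. apply Rle_plus_epsilon. intros eps Heps.
  set (e := eps ^ 2 / (c + 1)).
  assert (He : 0 < e) by (unfold e; apply Rdiv_lt_0_compat; [simpl; nra| lra]).
  specialize (H e He).
  assert (sqrt (c * e) <= eps).
  { rewrite <- (sqrt_pow2 eps) by lra. apply sqrt_le_1_alt. unfold e.
    apply (Rmult_le_reg_r (c + 1)); [lra|].
    replace (c * (eps ^ 2 / (c + 1)) * (c + 1)) with (c * eps ^ 2) by (field; lra).
    assert (0 <= eps ^ 2) by apply pow2_ge_0. nra. }
  lra. Qed.

Lemma lim_d T Q B : 0 < T -> 0 <= B -> (forall d, 0 < d < T -> (T - d) * Q <= B) -> T * Q <= B.
Proof. intros HT HB H. apply Rle_plus_epsilon. intros eps Heps.
  destruct (Rle_lt_dec Q 0) as [HQ|HQ].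
  - assert (T * Q <= 0) by nra. lra.
  - set (d := Rmin (T / 2) (eps / Q)).
    assert (Hd1 : d <= T / 2) by apply Rmin_l.
    assert (Hd2 : d <= eps / Q) by apply Rmin_r.
    assert (Hd0 : 0 < d) by (apply Rmin_glb_lt; [lra| apply Rdiv_lt_0_compat; lra]).
    assert (Hd3 : d < T) by lra. specialize (H d (conj Hd0 Hd3)).
    assert (d * Q <= eps).
    { apply Rle_trans with (eps / Q * Q). apply Rmult_le_compat_r; lra. right; field; lra. }
    nra. Qed.

Theorem mainTheorem3 (V : Type) (nbr : V -> list V) (w : V -> V -> R)
  (mu : V -> R) (n K Dmu Dw : R) (u : V -> R -> R) :
  is_graph nbr -> connected nbr -> infinite_type V -> weights_ok nbr w mu ->
  0 < n -> 0 < K -> CDE nbr w mu n (- K) ->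
  is_Dmu nbr w mu Dmu -> is_Dw nbr w Dw ->
  heat_solution nbr w mu u ->
  forall (x : V) (t : R), 0 < t ->
    Gam nbr w mu (fun y => sqrt (u y t)) (fun y => sqrt (u y t)) x / u x t
    - Derive (fun s => sqrt (u x s)) t / sqrt (u x t)
    <= n / (2 * t) + sqrt (/ 2 * n * K * Dmu * (Dw + 1)).
Proof.
  intros _ _ _ [Hw Hmu] Hn HK HCDE [HubM HlubM] [HubW HlubW] [Hpos0 [Hder _]] x T HT.
  assert (Hpos : forall x t, 0 < t -> 0 < u x t) by (intros; apply Hpos0; lra).
  assert (Hw' : forall x y, In y (nbr x) -> 0 < w x y) by (intros; apply Hw; auto).
  assert (Hdmu : forall x, deg nbr w x / mu x <= Dmu) by (intros z; apply HubM; exists z; auto).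
  assert (HDmu : 0 <= Dmu).
  { eapply Rle_trans; [|apply (Hdmu x)]. apply Rmult_le_pos. apply deg_nonneg; auto.
    left; apply Rinv_0_lt_compat; auto. }
  assert (Hdw : forall x y, In y (nbr x) -> deg nbr w x / w x y <= Dw)
    by (intros z y Hy; apply HubW; exists z, y; split; auto).
  assert (HDw : 0 <= Dw).
  { destruct (classic (exists z y, In y (nbr z))) as [[z [y Hy]]|Hno].
    - eapply Rle_trans; [|apply (Hdw z y Hy)]. apply Rmult_le_pos. apply deg_nonneg; auto.
      left; apply Rinv_0_lt_compat; auto.
    - exfalso. assert (Dw <= Dw - 1); [|lra]. apply HlubW. intros r [z [y [Hy _]]].
      exfalso; apply Hno; exists z, y; exact Hy. }
  set (f := fun y => sqrt (u y T)).
  pose proof (Hpos x T HT) as HuxT.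
  assert (Hfx : 0 < f x) by (apply sqrt_lt_R0; auto).
  assert (HD : Derive (fun s => sqrt (u x s)) T = Lap nbr w mu (fun y => u y T) x / (2 * sqrt (u x T))).
  { apply is_derive_unique. apply D_sqrt; auto. }
  rewrite HD.
  assert (Hff : Lap nbr w mu (fun y => u y T) x = Lap nbr w mu (fun z => f z * f z) x).
  { apply Lap_ext. intros z. unfold f. rewrite sqrt_sqrt; auto. left; auto. }
  rewrite Hff. fold f.
  assert (HuT : u x T = f x * f x) by (unfold f; rewrite sqrt_sqrt; auto; lra).
  change (sqrt (u x T)) with (f x). rewrite HuT.
  replace (Gam nbr w mu f f x / (f x * f x) - Lap nbr w mu (fun z : V => f z * f z) x / (2 * f x) / f x)
    with (- Lap nbr w mu f x / f x) by (unfold Gam; field; lra).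
  set (S0 := sqrt (/ 2 * n * K * Dmu * (Dw + 1))).
  assert (HS0 : 0 <= S0) by apply sqrt_pos.
  set (Q0 := - Lap nbr w mu f x / f x).
  set (c := n / 2 * (T * Dmu * Dw ^ 2 * (2 * T ^ 2 * Dmu ^ 2 / n))).
  assert (Hc : 0 <= c).
  { unfold c. assert (0 <= Dw ^ 2) by apply pow2_ge_0. assert (0 <= T ^ 2) by apply pow2_ge_0.
    assert (0 <= Dmu ^ 2) by apply pow2_ge_0.
    apply Rmult_le_pos; [left; apply Rdiv_lt_0_compat; lra|].
    apply Rmult_le_pos; [repeat apply Rmult_le_pos; lra|].
    apply Rmult_le_pos; [|left; apply Rinv_0_lt_compat; lra].
    repeat apply Rmult_le_pos; lra. }
  assert (Ha : sqrt (n / 2 * (T ^ 2 * K * (Dw + 1) * Dmu)) = T * S0).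
  { unfold S0. replace (n / 2 * (T ^ 2 * K * (Dw + 1) * Dmu)) with (T ^ 2 * (/ 2 * n * K * Dmu * (Dw + 1))) by field.
    rewrite sqrt_mult_alt by apply pow2_ge_0. rewrite sqrt_pow2 by lra. reflexivity. }
  assert (Hstep : forall d, 0 < d < T -> (T - d) * Q0 <= n / 2 + T * S0).
  { intros d Hd. apply (lim_e _ _ c Hc). intros e He.
    pose proof (step V nbr w mu n K Dmu Dw u x T d e Hw' Hmu Hn HK HCDE Hdmu HDmu Hdw HDw Hpos
       (fun x t Ht => Hder x t Ht) Hd He) as Hs.
    assert (HQ : - Lap nbr w mu (fun y => sqrt (u y T)) x / sqrt (u x T) = Q0) by reflexivity. rewrite HQ in Hs.
    assert (Hp1 : 0 <= n / 2 * (T ^ 2 * K * (Dw + 1) * Dmu)).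
    { apply Rmult_le_pos; [left; apply Rdiv_lt_0_compat; lra|].
      assert (0 <= T ^ 2) by apply pow2_ge_0.
      repeat apply Rmult_le_pos; lra. }
    assert (Hp2 : 0 <= c * e) by (apply Rmult_le_pos; lra).
    assert (E1 : n / 2 * (T ^ 2 * K * (Dw + 1) * Dmu + T * Dmu * Dw ^ 2 * (2 * e * T ^ 2 * Dmu ^ 2 / n))
       = n / 2 * (T ^ 2 * K * (Dw + 1) * Dmu) + c * e) by (unfold c; field; lra).
    rewrite E1 in Hs. pose proof (sqrt_add_le _ _ Hp1 Hp2) as Hsq. rewrite Ha in Hsq. lra. }
  assert (HB : 0 <= n / 2 + T * S0) by (assert (0 <= T * S0) by (apply Rmult_le_pos; lra); lra).
  pose proof (lim_d T Q0 _ HT HB Hstep) as Hfin.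
  apply (Rmult_le_reg_l T); auto.
  replace (T * (n / (2 * T) + S0)) with (n / 2 + T * S0) by (field; lra). unfold Q0 in Hfin. exact Hfin.
Qed.
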